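(* Every simple partially ordered abelian group of rank one $(G,G^+)$ is order-isomorphic to the direct limit of a directed system $(G_n,f_{n,n+1})_{n\ge 1}$ in which, for every $n\in\mathbb{N}$, $G_n=(\mathbb{Z},G_n^+)$ is a simple component and $f_{n,n+1}\colon G_n\to G_{n+1}$ is an order-embedding.
   Context: A partially ordered abelian group $(G,G^+)$ is an abelian group $G$ with a submonoid $G^+$ (containing $0$) such that $G^+\cap(-G^+)=\{0\}$; write $x\le_G y$ iff $y-x\in G^+$. An order-unit is $0\neq u\in G^+$ such that for every $x\in G$ there is $n\in\mathbb{N}$ with $-nu\le_G x\le_G nu$. $(G,G^+)$ is simple if $G\neq 0$ and every nonzero element of $G^+$ is an order-unit. $G$ has rank one if it is isomorphic (as an abelian group) to a nonzero subgroup of $\mathbb{Q}$. A simple component is a simple partially ordered abelian group of the form $(\mathbb{Z},P)$. A positive morphism $f\colon G\to H$ is a group homomorphism with $f(G^+)\subseteq H^+$; it is an order-embedding if it is injective and $f(G^+)=f(G)\cap H^+$. The direct limit of a directed system of partially ordered abelian groups with positive connecting maps is the group-theoretic direct limit with positive cone the union of the images of the positive cones. *)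

(* Defs.v *)
From HB Require Import structures.
From mathcomp Require Import all_boot all_order all_algebra.
Set Implicit Arguments. Unset Strict Implicit. Unset Printing Implicit Defensive.
Import Order.TTheory GRing.Theory Num.Theory.
Local Open Scope ring_scope.

Definition pog_cone (G : zmodType) (P : G -> Prop) : Prop :=
  [/\ P 0, (forall x y, P x -> P y -> P (x + y)) &
      (forall x, P x -> P (- x) -> x = 0)].

Definition pog_le (G : zmodType) (P : G -> Prop) (x y : G) : Prop := P (y - x).

Definition order_unit (G : zmodType) (P : G -> Prop) (u : G) : Prop :=
  [/\ u <> 0, P u &
      forall x : G, exists n : nat, pog_le P (- (u *+ n)) x /\ pog_le P x (u *+ n)].

Definition simple_pog (G : zmodType) (P : G -> Prop) : Prop :=
  [/\ pog_cone P, (exists x : G, x <> 0) &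
      (forall u, P u -> u <> 0 -> order_unit P u)].

(* rank one: isomorphic (as abelian group) to a nonzero subgroup of Q,
   i.e. G is nonzero and embeds (injective additive map) into Q. *)
Definition rank_one (G : zmodType) : Prop :=
  (exists x : G, x <> 0) /\
  exists phi : G -> rat,
    (forall x y, phi (x + y) = phi x + phi y) /\ injective phi.

Definition positive_morphism (G H : zmodType) (PG : G -> Prop) (PH : H -> Prop)
  (f : G -> H) : Prop :=
  (forall x y, f (x + y) = f x + f y) /\ (forall x, PG x -> PH (f x)).

(* order-embedding: injective positive morphism with f(G^+) = f(G) \cap H^+ *)
Definition order_embedding (G H : zmodType) (PG : G -> Prop) (PH : H -> Prop)
  (f : G -> H) : Prop :=
  [/\ positive_morphism PG PH f, injective f &
      forall x, PH (f x) -> exists x', PG x' /\ f x' = f x].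

(* Directed system indexed by nat: objects (int, P n), connecting maps
   f n : G_n -> G_{n+1}.  fcomp f n k = f_{n, n+k}. *)
Fixpoint fcomp (f : nat -> int -> int) (n k : nat) (x : int) : int :=
  match k with
  | 0 => x
  | k'.+1 => f (n + k')%N (fcomp f n k' x)
  end.

(* Group-theoretic direct limit, realized as the setoid of pairs (n, x)
   with x in G_n, modulo (n,x) ~ (m,y) iff f_{n,k} x = f_{m,k} y for some k. *)
Definition dl_eq (f : nat -> int -> int) (a b : nat * int) : Prop :=
  exists k : nat, [/\ (a.1 <= k)%N, (b.1 <= k)%N &
    fcomp f a.1 (k - a.1) a.2 = fcomp f b.1 (k - b.1) b.2].

Definition dl_add (f : nat -> int -> int) (a b : nat * int) : nat * int :=
  let k := maxn a.1 b.1 in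
  (k, fcomp f a.1 (k - a.1) a.2 + fcomp f b.1 (k - b.1) b.2).

Definition dl_pos (P : nat -> int -> Prop) (f : nat -> int -> int) (a : nat * int)
  : Prop :=
  exists (m : nat) (y : int), P m y /\ dl_eq f (m, y) a.

Definition dl_order_iso (G : zmodType) (PG : G -> Prop)
  (P : nat -> int -> Prop) (f : nat -> int -> int) (h : G -> nat * int) : Prop :=
  [/\ (forall x y, dl_eq f (h (x + y)) (dl_add f (h x) (h y))),
      (forall x y, dl_eq f (h x) (h y) -> x = y),
      (forall z, exists x, dl_eq f (h x) z) &
      (forall x, PG x <-> dl_pos P f (h x))].

(* Main.v *)
Require Import Defs.
From mathcomp Require Import all_boot all_order all_algebra.
From mathcomp Require Import ring.
From Stdlib Require Import ClassicalEpsilon.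
Import GRing.Theory Num.Theory.
Local Open Scope ring_scope.
Lemma iota_fcomp {G : zmodType} {g : nat -> G} {c : nat -> int}
  (hc : forall n, g n = g n.+1 *~ c n) n k x :
  g (n + k)%N *~ fcomp (fun m y => y * c m) n k x = g n *~ x.
Proof.
elim: k => [|k IH] /=; first by rewrite addn0.
by rewrite addnS mulrzA mulrzAC -hc.
Qed.

Lemma iota_inj {G : zmodType} (tf : forall (x : G) k, x *~ k = 0 -> k != 0 -> x = 0)
  {u : G} {a b : int} : u != 0 -> u *~ a = u *~ b -> a = b.
Proof.
move=> hu e; apply/eqP; rewrite -subr_eq0; apply/negPn/negP => hn.
have := tf u (a - b); rewrite mulrzBr e subrr => /(_ erefl hn) h.
by rewrite h eqxx in hu.
Qed.

Lemma dl_eq_iota {G : zmodType} (tf : forall (x : G) k, x *~ k = 0 -> k != 0 -> x = 0)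
  {g : nat -> G} {c : nat -> int} (hg : forall n, g n != 0)
  (hc : forall n, g n = g n.+1 *~ c n) a b :
  dl_eq (fun m y => y * c m) a b <-> g a.1 *~ a.2 = g b.1 *~ b.2.
Proof.
split.
  case=> k [ha hb e].
  have := iota_fcomp hc a.1 (k - a.1) a.2; rewrite subnKC // => <-.
  have := iota_fcomp hc b.1 (k - b.1) b.2; rewrite subnKC // => <-.
  by rewrite e.
move=> e; exists (maxn a.1 b.1); split; rewrite ?leq_maxl ?leq_maxr //.
apply: (iota_inj tf (hg (maxn a.1 b.1))).
have := iota_fcomp hc a.1 (maxn a.1 b.1 - a.1) a.2; rewrite subnKC ?leq_maxl // => ->.
have := iota_fcomp hc b.1 (maxn a.1 b.1 - b.1) b.2; rewrite subnKC ?leq_maxr // => ->.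
exact: e.
Qed.

Lemma mulrz_nat_comm (G : zmodType) (y : G) (u : int) m : y *~ (u *+ m) = y *~ u *+ m.
Proof. elim: m => [|m IH]; first by rewrite !mulr0n mulr0z.
by rewrite !mulrS mulrzDr IH. Qed.

Lemma general (G : zmodType) (Gp : G -> Prop)
  (tf : forall (x : G) k, x *~ k = 0 -> k != 0 -> x = 0)
  (g : nat -> G) (c : nat -> int) (hg : forall n, g n != 0)
  (hc : forall n, g n = g n.+1 *~ c n) (hc0 : forall n, c n != 0)
  (hall : forall x, exists n d, x = g n *~ d) :
  simple_pog Gp ->
  exists (P : nat -> int -> Prop) (f : nat -> int -> int),
    [/\ (forall n, simple_pog (P n)),
        (forall n, order_embedding (P n) (P n.+1) (f n)) &
        exists h : G -> nat * int, dl_order_iso Gp P f h].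
Proof.
case=> [[P0 PD Pa] _ Pu].
have key := dl_eq_iota tf hg hc.
exists (fun n x => Gp (g n *~ x)), (fun m y => y * c m); split.
- move=> n; split.
  + split; first by rewrite mulr0z.
    * by move=> x y hx hy; rewrite mulrzDr; apply: PD.
    * move=> x hx hnx; apply: (iota_inj tf (hg n)); rewrite mulr0z.
      by apply: Pa => //; rewrite -mulrNz.
  + by exists 1.
  + move=> u hu hu0; split => //.
    have hne : g n *~ u <> 0.
      move=> e; have := tf _ _ e; rewrite (introN eqP hu0) => /(_ erefl) e'.
      by move: (hg n); rewrite e' eqxx.
    have [_ _ hun] := Pu (g n *~ u) hu hne.
    move=> x; have [m [h1 h2]] := hun (g n *~ x).
    exists m; rewrite /pog_le.
    by split; rewrite mulrzBr ?mulrNz mulrz_nat_comm.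
- move=> n; split.
  + split; first by move=> x y; rewrite mulrDl.
    by move=> x hx; rewrite mulrzA mulrzAC -hc.
  + by move=> x y /eqP; rewrite (inj_eq (mulIf (hc0 n))) => /eqP.
  + by move=> x hx; exists x; split => //; move: hx; rewrite mulrzA mulrzAC -hc.
- pose h x := epsilon (inhabits (0%N, 0)) (fun p : nat * int => g p.1 *~ p.2 = x).
  have hh x : g (h x).1 *~ (h x).2 = x.
    apply: (epsilon_spec (inhabits (0%N, 0)) (fun p : nat * int => g p.1 *~ p.2 = x)).
    by have [n [d ->]] := hall x; exists (n, d).
  exists h; split.
  + move=> x y; apply/key; rewrite hh /dl_add /= mulrzDr.
    have := iota_fcomp hc (h x).1 (maxn (h x).1 (h y).1 - (h x).1) (h x).2.
    rewrite subnKC ?leq_maxl // => ->.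
    have := iota_fcomp hc (h y).1 (maxn (h x).1 (h y).1 - (h y).1) (h y).2.
    by rewrite subnKC ?leq_maxr // => ->; rewrite !hh.
  + by move=> x y /key; rewrite !hh.
  + by move=> z; exists (g z.1 *~ z.2); apply/key; rewrite hh.
  + move=> x; split.
      by move=> hx; exists (h x).1, (h x).2; split; [rewrite hh | exact/key].
    by case=> m [y [hy /key]]; rewrite hh /= => <-.
Qed.
Lemma phi_props {G : zmodType} {phi : G -> rat}
  (pD : forall x y, phi (x + y) = phi x + phi y) :
  forall x k, phi (x *~ k) = phi x * k%:~R.
Proof.
have p0 : phi 0 = 0 by apply/(@addrI _ (phi 0)); rewrite -pD !addr0.
have pN x : phi (- x) = - phi x.
  by apply/(@addrI _ (phi x)); rewrite -pD !subrr.
have pn x n : phi (x *+ n) = phi x *+ n.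
  by elim: n => [|n IH]; rewrite ?mulr0n ?p0 // !mulrS pD IH.
move=> x [n|n]; rewrite mulrzr.
  by rewrite -pmulrn pn.
by rewrite NegzE mulrNz mulrNz pN -!pmulrn pn.
Qed.

Lemma construct (G : zmodType) : rank_one G ->
  exists (tf : forall (x : G) k, x *~ k = 0 -> k != 0 -> x = 0)
    (g : nat -> G) (c : nat -> int),
    [/\ (forall n, g n != 0), (forall n, g n = g n.+1 *~ c n),
        (forall n, c n != 0) & (forall x, exists n d, x = g n *~ d)].
Proof.
case=> [[x0 hx0] [phi [pD pinj]]].
have pz := phi_props pD.
have p0 : phi 0 = 0 by rewrite -(mulr0z 0) pz mulr0.
have tf : forall (x : G) k, x *~ k = 0 -> k != 0 -> x = 0.
  move=> x k e hk; apply: pinj; rewrite p0.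
  move: e => /(congr1 phi); rewrite pz p0 => /eqP; rewrite mulf_eq0 intr_eq0.
  by rewrite (negbTE hk) orbF => /eqP.
have cyc : forall x y : G, x != 0 -> exists p : G * int,
    [/\ x = p.1 *~ p.2, p.2 != 0 & exists d, y = p.1 *~ d].
  move=> x y hx.
  set a := phi x; set b := phi y.
  have ha : a != 0 by apply: contra hx => /eqP e; apply/eqP/pinj; rewrite p0.
  set M := numq b * denq a; set N := numq a * denq b.
  have eMN : a * M%:~R = b * N%:~R.
    rewrite /M /N !intrM !numqE; ring.
  have hN : N != 0 by rewrite mulf_neq0 ?denq_neq0 ?numq_eq0.
  clearbody M N.
  set g := gcdz M N.
  have hg : g != 0 by rewrite gcdz_eq0 negb_and hN orbT.
  have [u [v huv]] := Bezoutz M N.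
  have eN := divzK (dvdz_gcdr M N); have eM := divzK (dvdz_gcdl M N).
  set N' := (N %/ gcdz M N)%Z in eN; set M' := (M %/ gcdz M N)%Z in eM.
  set z := y *~ u + x *~ v.
  have hG : (g%:~R : rat) != 0 by rewrite intr_eq0.
  have e1 : x = z *~ N'.
    apply: pinj; rewrite pz pD !pz -/a -/b.
    apply: (mulIf hG).
    have E1 := congr1 (fun t : int => (t%:~R : rat)) eN.
    have E2 := congr1 (fun t : int => (t%:~R : rat)) eM.
    have E3 := congr1 (fun t : int => (t%:~R : rat)) huv.
    move: E1 E2 E3 eMN => /=; rewrite !intrD !intrM -/g => E1 E2 E3 eMN.
    transitivity (a * (u%:~R * M%:~R + v%:~R * N%:~R)); first by rewrite E3.
    transitivity (u%:~R * (a * M%:~R) + a * v%:~R * N%:~R); first by ring.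
    have E1' : (N%:~R : rat) = N'%:~R * g%:~R by rewrite -intrM eN.
    rewrite eMN E1'; ring.
  have e2 : y = z *~ M'.
    apply: pinj; rewrite pz pD !pz -/a -/b.
    apply: (mulIf hG).
    have E1 := congr1 (fun t : int => (t%:~R : rat)) eN.
    have E2 := congr1 (fun t : int => (t%:~R : rat)) eM.
    have E3 := congr1 (fun t : int => (t%:~R : rat)) huv.
    move: E1 E2 E3 eMN => /=; rewrite !intrD !intrM -/g => E1 E2 E3 eMN.
    transitivity (b * (u%:~R * M%:~R + v%:~R * N%:~R)); first by rewrite E3.
    transitivity (b * u%:~R * M%:~R + v%:~R * (b * N%:~R)); first by ring.
    have E1' : (N%:~R : rat) = N'%:~R * g%:~R by rewrite -intrM eN.
    have E2' : (M%:~R : rat) = M'%:~R * g%:~R by rewrite -intrM eM.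
    rewrite -eMN E2'; ring.
  exists (z, N'); split => //=; last by exists M'.
  by apply: contra hx => /eqP h0; rewrite e1 h0 mulr0z.
pose y k := epsilon (inhabits 0) (fun y : G => pickle (phi y) = k).
have hy x : y (pickle (phi x)) = x.
  have := epsilon_spec (inhabits 0) (fun y : G => pickle (phi y) = pickle (phi x)).
  by move=> /(_ (ex_intro _ x erefl)) /(pcan_inj pickleK) /pinj.
pose step (x yy : G) := epsilon (inhabits (x, 1))
  (fun p : G * int => [/\ x = p.1 *~ p.2, p.2 != 0 & exists d, yy = p.1 *~ d]).
have hstep x yy : x != 0 -> [/\ x = (step x yy).1 *~ (step x yy).2,
    (step x yy).2 != 0 & exists d, yy = (step x yy).1 *~ d].
  move=> hx; exact: (epsilon_spec (inhabits (x, 1))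
    (fun p : G * int => [/\ x = p.1 *~ p.2, p.2 != 0 & exists d, yy = p.1 *~ d])
    (cyc x yy hx)).
pose gs := fix gs (n : nat) : G * int :=
  match n with 0%N => (x0, 1) | n'.+1 => step (gs n').1 (y n') end.
have hg : forall n, (gs n).1 != 0.
  elim=> [|n IH]; first by apply/eqP.
  have [e _ _] := hstep _ (y n) IH.
  apply: contra IH => /eqP h0; rewrite e /=.
  by move: h0 => /= ->; rewrite mul0rz.
exists tf, (fun n => (gs n).1), (fun n => (gs n.+1).2); split => //.
- by move=> n; have [e _ _] := hstep _ (y n) (hg n).
- by move=> n; have [_ e _] := hstep _ (y n) (hg n).
- move=> x; have [_ _ [d e]] := hstep _ (y (pickle (phi x))) (hg (pickle (phi x))).
  by exists (pickle (phi x)).+1, d; rewrite -{1}(hy x) e.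
Qed.

Theorem proposition1p1 (G : zmodType) (Gp : G -> Prop) :
  simple_pog Gp -> rank_one G ->
  exists (P : nat -> int -> Prop) (f : nat -> int -> int),
    [/\ (forall n, simple_pog (P n)),
        (forall n, order_embedding (P n) (P n.+1) (f n)) &
        exists h : G -> nat * int, dl_order_iso Gp P f h].
Proof.
move=> hs /construct [tf [g [c [hg hc hc0 hall]]]].
exact: (@general G Gp tf g c hg hc hc0 hall hs).
Qed.
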